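(* There is a function $h$ such that for all integers $t,k\ge 1$, every $\mathcal{O}_k$-free graph with no $K_{t,t}$ subgraph has average degree at most $h(t,k)$ and chromatic number at most $h(t,k)+1$.
   Context: All graphs are finite, simple and nonempty. Two vertex-disjoint subgraphs are independent if there is no edge between them. A graph $G$ is $\mathcal{O}_k$-free if it does not contain $k$ pairwise vertex-disjoint and pairwise independent cycles; equivalently, $G$ has no induced subgraph isomorphic to a disjoint union of $k$ cycles. *)

(* Defs.v *)
From mathcomp Require Import all_boot all_order all_algebra.
Set Implicit Arguments. Unset Strict Implicit. Unset Printing Implicit Defensive.
Import GRing.Theory Num.Theory.

Definition simple_graph (T : finType) (e : rel T) : Prop :=
  symmetric e /\ irreflexive e.

Definition is_cycle (T : finType) (e : rel T) (s : seq T) : bool :=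
  (3 <= size s) && ucycleb e s.

Definition has_k_indep_cycles (T : finType) (e : rel T) (k : nat) : Prop :=
  exists C : 'I_k -> seq T,
    (forall i, is_cycle e (C i)) /\
    (forall i j, i != j ->
       forall x y, x \in C i -> y \in C j -> (x != y) && ~~ e x y).

Definition Ok_free (T : finType) (e : rel T) (k : nat) : Prop :=
  ~ has_k_indep_cycles e k.

Definition has_Ktt_subgraph (T : finType) (e : rel T) (t : nat) : Prop :=
  exists A B : {set T},
    [/\ #|A| = t, #|B| = t, [disjoint A & B] &
        forall x y, x \in A -> y \in B -> e x y].

Definition degree (T : finType) (e : rel T) (v : T) : nat := #|[set w | e v w]|.

Definition avg_degree (T : finType) (e : rel T) : rat :=
  ((\sum_(v : T) degree e v)%N)%:R / (#|T|)%:R.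

Definition colorable (T : finType) (e : rel T) (c : nat) : Prop :=
  exists f : T -> 'I_c, forall x y, e x y -> f x != f y.

(* Main.v *)
Require Import Defs.
From mathcomp Require Import all_boot all_order all_algebra.
From mathcomp Require Import zify.
From Stdlib Require Import Classical_Prop.
Import GRing.Theory Num.Theory.
Set Implicit Arguments. Unset Strict Implicit. Unset Printing Implicit Defensive.

Definition wrap (g a : nat) := if a < g then a else a - g.
Definition cdist (g i j : nat) := if i <= j then j - i else j + g - i.


Lemma wrap_lt g a : a < 2 * g -> wrap g a < g.
Proof. rewrite /wrap; case: ifP; lia. Qed.
Lemma wrap_id g a : a < g -> wrap g a = a.
Proof. by rewrite /wrap => ->. Qed.
Lemma wrap_inj g i d a b : i < g -> d < g -> i <= a < i + d.+1 -> i <= b < i + d.+1 ->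
  wrap g a = wrap g b -> a = b.
Proof. rewrite /wrap; case: ifP; case: ifP; lia. Qed.
Lemma wrap_end g i j : i < g -> j < g -> wrap g (i + cdist g i j) = j.
Proof. rewrite /wrap /cdist; case: ifP; case: ifP; lia. Qed.
Lemma cdist_lt g i j : i < g -> j < g -> cdist g i j < g.
Proof. rewrite /cdist; case: ifP; lia. Qed.
Lemma wrap_S g a : a.+1 < 2 * g -> wrap g (wrap g a).+1 = wrap g a.+1.
Proof. rewrite /wrap; case: ifP; case: ifP; try case: ifP; lia. Qed.

Section Arc.
Variables (T : finType) (e : rel T) (x0 : T).
Hypothesis esym : symmetric e.
Hypothesis eirr : irreflexive e.

Lemma cyc_step C a : is_cycle e C -> a < size C ->
  e (nth x0 C a) (nth x0 C (wrap (size C) a.+1)).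
Proof.
case: C => [|x C'] //= /andP [_ /andP [cyc _]] Ha.
have /(pathP x0) H := cyc.
have := H a; rewrite size_rcons => /(_ Ha).
rewrite -rcons_cons nth_rcons /= Ha nth_rcons /wrap /=.
case: (ltnP a (size C')) => Ha2.
  by have -> : a.+1 < (size C').+1 by lia.
have -> : a == size C' by lia.
have -> : (a.+1 < (size C').+1) = false by lia.
by have -> : a.+1 - (size C').+1 = 0 by lia.
Qed.

Lemma cyc_step' C a : is_cycle e C -> a.+1 < 2 * size C ->
  e (nth x0 C (wrap (size C) a)) (nth x0 C (wrap (size C) a.+1)).
Proof.
move=> HC Ha.
have Hw : wrap (size C) a < size C by apply: wrap_lt; lia.
have := cyc_step HC Hw.
by rewrite wrap_S.
Qed.

Lemma arc_path C i n : is_cycle e C -> i + n < 2 * size C ->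
  path e (nth x0 C (wrap (size C) i))
    (map (fun m => nth x0 C (wrap (size C) m)) (iota i.+1 n)).
Proof.
move=> HC; elim: n i => [|n IH] i Hin //=.
rewrite cyc_step' //; last by lia.
by apply: IH; lia.
Qed.

Lemma arc_last C i n : 
  last (nth x0 C (wrap (size C) i))
    (map (fun m => nth x0 C (wrap (size C) m)) (iota i.+1 n))
  = nth x0 C (wrap (size C) (i + n)).
Proof.
elim: n i => [|n IH] i /=; first by rewrite addn0.
by rewrite IH addnS.
Qed.

Lemma arc_cycle C P i j :
  is_cycle e C -> i < size C -> j < size C -> uniq P ->
  (forall p, p \in P -> p \notin C) ->
  path e (nth x0 C j) (rcons P (nth x0 C i)) ->
  3 <= size P + (cdist (size C) i j).+1 ->
  exists Q, [/\ is_cycle e Q, size Q = size P + (cdist (size C) i j).+1 &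
     forall v, v \in Q -> (v \in C) || (v \in P)].
Proof.
move=> HC Hi Hj uP PC Hpath H3.
have Hd := cdist_lt Hi Hj.
have Hwd := wrap_end Hi Hj.
move: Hd Hwd H3; set d := cdist (size C) i j => Hd Hwd H3.
clearbody d.
have Hwl : forall m, i <= m < i + d.+1 -> wrap (size C) m < size C.
  move=> m Hm; apply: wrap_lt; lia.
set f := fun m => nth x0 C (wrap (size C) m).
exists (map f (iota i d.+1) ++ P); split.
- rewrite /is_cycle size_cat size_map size_iota addnC H3 /= /ucycleb.
  apply/andP; split.
    rewrite /= rcons_cat cat_path arc_path //; last by lia.
    rewrite arc_last Hwd.
    by rewrite /f wrap_id.
  rewrite -[f i :: _]/(map f (iota i d.+1) ++ P) cat_uniq uP andbT; apply/andP; split.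
    have Hinj : forall m1 m2 : nat, i <= m1 < i + d.+1 -> i <= m2 < i + d.+1 ->
        f m1 = f m2 -> m1 = m2.
      move=> m1 m2 Hm1 Hm2 /eqP.
      rewrite /f nth_uniq; last by case/andP: HC => _ /andP [].
      + by move/eqP; apply: wrap_inj Hm1 Hm2.
      + exact: Hwl.
      + exact: Hwl.
    rewrite map_inj_in_uniq ?iota_uniq //.
    by move=> m1 m2; rewrite !mem_iota; apply: Hinj.
  apply/hasPn => p /PC pC; apply/negP => /mapP [m Hm Ep].
  move: pC; rewrite Ep mem_nth //.
  by apply: Hwl; rewrite -mem_iota.
- by rewrite size_cat size_map size_iota addnC.
- move=> v; rewrite mem_cat => /orP [/mapP [m Hm ->]|->]; last by rewrite orbT.
  by rewrite mem_nth //; apply: Hwl; rewrite -mem_iota.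
Qed.

End Arc.

Lemma max_exists (P : nat -> Prop) n0 B : P n0 -> (forall n, P n -> n <= B) ->
  exists n, P n /\ forall m, P m -> m <= n.
Proof.
move=> Pn0 HB.
have: forall k n, B - n <= k -> P n -> exists n, P n /\ forall m, P m -> m <= n.
  elim=> [|k IH] n Hk Pn.
    exists n; split=> // m Pm; have := HB _ Pm; have := HB _ Pn; lia.
  case: (classic (exists m, P m /\ n < m)) => [[m [Pm Hm]]|Hno].
    apply: (IH m) => //; have := HB _ Pm; lia.
  exists n; split=> // m Pm; case: (leqP m n) => // Hnm.
  by exfalso; apply: Hno; exists m.
by move/(_ (B - n0) n0 (leqnn _) Pn0).
Qed.

Lemma min_exists (P : nat -> Prop) n0 : P n0 ->
  exists n, P n /\ forall m, P m -> n <= m.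
Proof.
elim: n0 {-2}n0 (leqnn n0) => [|k IH] n Hn Pn.
  by exists n; split=> // m _; lia.
case: (classic (exists m, P m /\ m < n)) => [[m [Pm Hm]]|Hno].
  by apply: (IH m) => //; lia.
exists n; split=> // m Pm; case: (leqP n m) => // Hnm.
by exfalso; apply: Hno; exists m.
Qed.

Section Graph.
Variables (T : finType) (e : rel T) (x0 : T).
Hypothesis esym : symmetric e.
Hypothesis eirr : irreflexive e.

Definition nbS (S : {set T}) v := [set w in S | e v w].
Definition mindeg (S : {set T}) d := forall v, v \in S -> d <= #|nbS S v|.
Definition cyc_in (S : {set T}) C := is_cycle e C /\ {subset C <= S}.
Definition indepb (C1 C2 : seq T) :=
  all (fun x => all (fun y => (x != y) && ~~ e x y) C2) C1.

Definition vp (S : {set T}) p :=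
  [&& uniq p, all (mem S) p, p != [::] & path e (head x0 p) (behead p)].

Lemma cycle_exists (S : {set T}) : (exists v, v \in S) -> mindeg S 2 -> exists C, cyc_in S C.
Proof.
move=> [v vS] Hmd.
have [n [[p [vpp <-]] Hmax]] : exists n, (exists p, vp S p /\ size p = n) /\
    forall m, (exists p, vp S p /\ size p = m) -> m <= n.
  apply: (@max_exists _ 1 #|T|).
    by exists [:: v]; rewrite /vp /= vS.
  move=> n [p [/and4P [up _ _ _] <-]].
  by rewrite -(card_uniqP up) max_card.
case: p vpp Hmax => [|x q] // /and4P [/= /andP [xq uq] /= /andP [xS qS] _ pq] Hmax.
have Nq : forall w, w \in nbS S x -> w \in q.
  move=> w; rewrite inE => /andP [wS exw].
  case: (boolP (w \in q)) => // wq; exfalso.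
  have wx : w != x by apply/eqP => Ewx; rewrite Ewx eirr in exw.
  have : size [:: w, x & q] <= size (x :: q).
    apply: Hmax; exists [:: w, x & q]; split=> //.
    rewrite /vp /= wS xS qS /= pq andbT esym exw andbT.
    by rewrite inE negb_or wx wq xq uq.
  by rewrite /=; lia.
have [y yN yh] : exists2 y, y \in nbS S x & y != head x0 q.
  case: (classic (exists2 y, y \in nbS S x & y != head x0 q)) => // Hno.
  have := Hmd _ xS.
  have : nbS S x \subset [set head x0 q].
    apply/subsetP => w wN; rewrite inE; case: (boolP (w == head x0 q)) => // wh.
    by exfalso; apply: Hno; exists w.
  move/subset_leq_card; rewrite cards1; lia.
have yq := Nq _ yN.
move: yN; rewrite inE => /andP [yS exy].
set j := index y q.
have Hj : j < size q by rewrite /j index_mem.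
have Hj0 : 0 < j.
  rewrite lt0n; apply/eqP => Ej; move: yh; rewrite -(nth_index x0 yq) -/j Ej.
  by case: (q) => [|? ?] /=; rewrite ?eqxx.
have Hy : nth x0 q j = y by rewrite nth_index.
clearbody j.
have Hsz : size (take j.+1 q) = j.+1 by rewrite size_takel.
exists (x :: take j.+1 q); split.
- rewrite /is_cycle /ucycleb /=.
  apply/and3P; split.
  + by rewrite Hsz; lia.
  + rewrite rcons_path take_path //=.
    rewrite (last_nth x0) Hsz /= nth_take // Hy.
    by rewrite esym.
  + by rewrite take_uniq // andbT; apply: contra xq; apply: mem_take.
- move=> w; rewrite inE => /orP [/eqP -> //|/mem_take wq].
  by move/allP: qS => /(_ w wq).
Qed.

End Graph.

Lemma cdist_sum g i j : i < g -> j < g -> i != j -> cdist g i j + cdist g j i = g.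
Proof. rewrite /cdist; case: ifP; case: ifP; lia. Qed.
Lemma cdist_pos g i j : i < g -> j < g -> i != j -> 0 < cdist g i j.
Proof. rewrite /cdist; case: ifP; lia. Qed.
Lemma cdist_same g i : cdist g i i = 0.
Proof. by rewrite /cdist leqnn subnn. Qed.
Lemma cdist0 g m : cdist g 0 m = m.
Proof. by rewrite /cdist leq0n subn0. Qed.

Section Girth.
Variables (T : finType) (e : rel T) (x0 : T).
Hypothesis esym : symmetric e.
Hypothesis eirr : irreflexive e.

Lemma min_cycle (S : {set T}) : (exists C, cyc_in e S C) ->
  exists C, cyc_in e S C /\ forall Q, cyc_in e S Q -> size C <= size Q.
Proof.
move=> [C0 HC0].
have [n [[C [HC <-]] Hmin]] :=
  @min_exists (fun n => exists C, cyc_in e S C /\ size C = n) (size C0)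
     (ex_intro _ C0 (conj HC0 erefl)).
exists C; split=> // Q HQ; apply: Hmin; by exists Q.
Qed.

Variables (S : {set T}) (C : seq T).
Hypothesis HC : cyc_in e S C.
Hypothesis Cmin : forall Q, cyc_in e S Q -> size C <= size Q.

Lemma arc_bound P i j : i < size C -> j < size C -> uniq P ->
  (forall p, p \in P -> p \notin C) -> {subset P <= S} ->
  path e (nth x0 C j) (rcons P (nth x0 C i)) ->
  3 <= size P + (cdist (size C) i j).+1 ->
  size C <= size P + (cdist (size C) i j).+1.
Proof.
move=> Hi Hj uP PC PS Hp H3.
case: HC => HC1 HC2.
have [Q [HQ <- QCP]] := arc_cycle HC1 Hi Hj uP PC Hp H3.
apply: Cmin; split=> // v /QCP /orP [/HC2|/PS] //.
Qed.

Lemma two_arcs P i j : i < size C -> j < size C -> i != j -> uniq P ->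
  (forall p, p \in P -> p \notin C) -> {subset P <= S} -> 0 < size P ->
  path e (nth x0 C j) (rcons P (nth x0 C i)) ->
  path e (nth x0 C i) (rcons (rev P) (nth x0 C j)) ->
  size C <= 2 * size P + 2.
Proof.
move=> Hi Hj ij uP PC PS P0 Hp1 Hp2.
have Hs := cdist_sum Hi Hj ij.
have Hp := cdist_pos Hi Hj ij.
have ji : j != i by rewrite eq_sym.
have Hp' := cdist_pos Hj Hi ji.
have B1 := arc_bound Hi Hj uP PC PS Hp1.
have B2 : size C <= size (rev P) + (cdist (size C) j i).+1.
  apply: arc_bound => //.
  - by rewrite rev_uniq.
  - by move=> p; rewrite mem_rev; apply: PC.
  - by move=> p; rewrite mem_rev; apply: PS.
  - by rewrite size_rev; lia.
rewrite size_rev in B2.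
have : size C <= size P + (cdist (size C) i j).+1 by apply: B1; lia.
move: Hs B2; move: (cdist (size C) i j) (cdist (size C) j i) (size C) => a b g.
lia.
Qed.

Lemma one_arc P i : i < size C -> uniq P ->
  (forall p, p \in P -> p \notin C) -> {subset P <= S} -> 2 <= size P ->
  path e (nth x0 C i) (rcons P (nth x0 C i)) ->
  size C <= size P + 1.
Proof.
move=> Hi uP PC PS P2 Hp.
have := arc_bound Hi Hi uP PC PS Hp; rewrite cdist_same addn1; apply; lia.
Qed.

Lemma Pok (P : seq T) : all (fun p => (p \notin C) && (p \in S)) P ->
  (forall p, p \in P -> p \notin C) /\ {subset P <= S}.
Proof.
move/allP=> H; split=> p /H /andP [] //.
Qed.

Hypothesis g9 : 9 <= size C.

Lemma U2 v i j : v \in S -> v \notin C -> i < size C -> j < size C ->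
  e v (nth x0 C i) -> e v (nth x0 C j) -> i = j.
Proof.
move=> vS vC Hi Hj ei ej; apply/eqP; apply: contraT => ij.
have /Pok [PC PS] : all (fun p => (p \notin C) && (p \in S)) [:: v] by rewrite /= vC vS.
have p1 : path e (nth x0 C j) (rcons [:: v] (nth x0 C i)).
  by rewrite /= (esym _ v) ej ei.
have p2 : path e (nth x0 C i) (rcons (rev [:: v]) (nth x0 C j)).
  by rewrite /= (esym _ v) ej ei.
have := two_arcs (P := [:: v]) Hi Hj ij (erefl _) PC PS (erefl _) p1 p2.
by move/(leq_trans g9).
Qed.

Lemma U3 x y i j : x \in S -> y \in S -> x \notin C -> y \notin C ->
  e x y -> i < size C -> j < size C ->
  e x (nth x0 C i) -> e y (nth x0 C j) -> False.
Proof.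
move=> xS yS xC yC exy Hi Hj ei ej.
have xy : x != y by apply/eqP => E; rewrite E eirr in exy.
have /Pok [PC PS] : all (fun p => (p \notin C) && (p \in S)) [:: y; x] by rewrite /= xC xS yC yS.
have uP : uniq [:: y; x] by rewrite /= inE eq_sym xy.
have p1 : path e (nth x0 C j) (rcons [:: y; x] (nth x0 C i)).
  by rewrite /= (esym _ y) ej (esym y x) exy ei.
case: (eqVneq i j) => [Eij|ij].
  subst j.
  have := one_arc (P := _) Hi uP PC PS (erefl _) p1.
  by move/(leq_trans g9).
have p2 : path e (nth x0 C i) (rcons (rev [:: y; x]) (nth x0 C j)).
  by rewrite /= (esym _ x) ei exy ej.
have := two_arcs Hi Hj ij uP PC PS (erefl _) p1 p2.
by move/(leq_trans g9).
Qed.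

Lemma U4 w x y i j : w \in S -> x \in S -> y \in S ->
  w \notin C -> x \notin C -> y \notin C -> x != y ->
  e w x -> e w y -> i < size C -> j < size C ->
  e x (nth x0 C i) -> e y (nth x0 C j) -> False.
Proof.
move=> wS xS yS wC xC yC xy ewx ewy Hi Hj ei ej.
have wx : w != x by apply/eqP => E; rewrite E eirr in ewx.
have wy : w != y by apply/eqP => E; rewrite E eirr in ewy.
have /Pok [PC PS] : all (fun p => (p \notin C) && (p \in S)) [:: y; w; x] by rewrite /= xC xS yC yS wC wS.
have uP : uniq [:: y; w; x].
  by rewrite /= !inE !negb_or (eq_sym y w) wy (eq_sym y x) xy wx.
have p1 : path e (nth x0 C j) (rcons [:: y; w; x] (nth x0 C i)).
  by rewrite /= (esym _ y) ej (esym y w) ewy ewx ei.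
case: (eqVneq i j) => [Eij|ij].
  subst j.
  have := one_arc (P := _) Hi uP PC PS (erefl _) p1.
  by move/(leq_trans g9).
have p2 : path e (nth x0 C i) (rcons (rev [:: y; w; x]) (nth x0 C j)).
  by rewrite /= (esym _ x) ei (esym x w) ewx ewy ej.
have := two_arcs Hi Hj ij uP PC PS (erefl _) p1 p2.
by move/(leq_trans g9).
Qed.

End Girth.

Section G4.
Variables (T : finType) (e : rel T) (x0 : T).
Hypothesis esym : symmetric e.
Hypothesis eirr : irreflexive e.

Lemma hasC (C : seq T) v : has (e v) C -> exists2 i, i < size C & e v (nth x0 C i).
Proof.
by move/hasP=> [c /(nthP x0) [i Hi <-] evc]; exists i.
Qed.

Lemma inNb (S : {set T}) v w : (w \in nbS e S v) = (w \in S) && e v w.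
Proof. by rewrite /nbS in_set. Qed.

Lemma girth_lemma k : forall S : {set T}, (exists v, v \in S) ->
  mindeg e S (k + 2) -> (forall C, cyc_in e S C -> 9 <= size C) ->
  exists L : seq (seq T),
    [/\ size L = k, forall C, C \in L -> cyc_in e S C & pairwise (indepb e) L].
Proof.
elim: k => [|k IH] S HS Hmd Hg.
  by exists [::]; split.
have Hmd2 : mindeg e S 2 by move=> v /Hmd; lia.
have HC0 := cycle_exists x0 esym eirr HS Hmd2.
have [C [HC Cmin]] := min_cycle HC0.
have g9 := Hg C HC.
have CS := HC.2.
set NC := [set v | (v \in C) || has (e v) C].
set S' := S :\: NC.
have inNC : forall v, (v \in NC) = (v \in C) || has (e v) C by move=> v; rewrite inE.
have inS' : forall v, (v \in S') = (v \notin NC) && (v \in S) by move=> v; rewrite inE.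
have H0 : 0 < size C by lia.
set c0 := nth x0 C 0.
have c0C : c0 \in C by apply: mem_nth.
have c0S := CS _ c0C.
have [x xN xC] : exists2 x, x \in nbS e S c0 & x \notin C.
  case: (classic (exists2 x, x \in nbS e S c0 & x \notin C)) => // Hno.
  have : nbS e S c0 \subset [set nth x0 C 1; nth x0 C (size C).-1].
    apply/subsetP => w wN.
    have wC : w \in C.
      case: (boolP (w \in C)) => // wC; exfalso; apply: Hno; by exists w.
    move: wN; rewrite inNb => /andP [wS ecw].
    have Hm := nth_index x0 wC; move: (index w C) (index_mem w C) Hm => m.
    rewrite wC => Hm Ew.
    rewrite !inE -Ew.
    case: (eqVneq m 1) => [->|m1]; first by rewrite eqxx.
    case: (eqVneq m (size C).-1) => [->|m2]; first by rewrite eqxx orbT.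
    exfalso.
    have m0 : m != 0.
      apply/eqP => E; move: ecw; rewrite -Ew E /c0 eirr //.
    have := @arc_bound _ _ x0 _ _ HC Cmin [::] 0 m H0 Hm erefl
       (fun p (H : p \in [::]) => False_ind _ (notF H))
       (fun p (H : p \in [::]) => False_ind _ (notF H)).
    rewrite /= cdist0 add0n Ew esym ecw /= => /(_ erefl).
    move: m0 m1 m2 Hm; move: (size C) => g.
    lia.
  move/subset_leq_card; rewrite cards2.
  have := Hmd _ c0S; case: (_ != _) ; lia.
move: xN; rewrite inNb => /andP [xS ecx].
have [y yN yC] : exists2 y, y \in nbS e S x & y \notin C.
  case: (classic (exists2 y, y \in nbS e S x & y \notin C)) => // Hno.
  have : nbS e S x \subset [set c0].
    apply/subsetP => w wN.
    have wC : w \in C.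
      case: (boolP (w \in C)) => // wC; exfalso; apply: Hno; by exists w.
    move: wN; rewrite inNb => /andP [wS exw].
    have Hm := nth_index x0 wC; move: (index w C) (index_mem w C) Hm => m.
    rewrite wC => Hm Ew.
    have := @U2 _ _ x0 esym _ _ HC Cmin g9 x 0 m xS xC H0 Hm.
    rewrite esym ecx Ew => /(_ erefl exw) E.
    by rewrite inE -Ew -E.
  move/subset_leq_card; rewrite cards1.
  have := Hmd _ xS; lia.
move: yN; rewrite inNb => /andP [yS exy].
have yS' : y \in S'.
  rewrite inS' inNC yS (negbTE yC) andbT /=.
  apply/negP => /hasC [j Hj eyj].
  have ex0 : e x (nth x0 C 0) by rewrite esym.
  exact: (@U3 _ _ x0 esym eirr _ _ HC Cmin g9 x y 0 j xS yS xC yC exy H0 Hj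
            ex0 eyj).
have Hmd' : mindeg e S' (k + 2).
  move=> w; rewrite inS' => /andP [wNC wS].
  have Hle : #|nbS e S w :&: NC| <= 1.
    apply/card_le1_eqP => u v; rewrite !inE => /andP [/andP [uS ewu] uNC]
       /andP [/andP [vS ewv] vNC].
    have nC : forall z, e w z -> z \notin C.
      move=> z ewz; apply/negP => zC; move: wNC; rewrite inNC negb_or => /andP [_].
      by move/negP; apply; apply/hasP; exists z.
    move: uNC; rewrite (negbTE (nC _ ewu)) /= => /hasC [i Hi eui].
    move: vNC; rewrite (negbTE (nC _ ewv)) /= => /hasC [j Hj evj].
    apply/eqP; apply: contraT => uv.
    have wC : w \notin C by apply: contra wNC; rewrite inNC => ->.
    rewrite eq_sym in uv.
    exfalso; exact: (@U4 _ _ x0 esym eirr _ _ HC Cmin g9 w u v i j wS uS vS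
      wC (nC _ ewu) (nC _ ewv) uv ewu ewv Hi Hj eui evj).
  have Hsub : nbS e S w \subset nbS e S' w :|: (nbS e S w :&: NC).
    apply/subsetP => u; rewrite inNb => /andP [uS ewu].
    rewrite in_setU in_setI !inNb uS ewu inS' /= andbT.
    by rewrite uS andbT; case: (u \in NC).
  have := subset_leq_card Hsub.
  have := (leq_card_setU (nbS e S' w) (nbS e S w :&: NC)).1.
  have := Hmd _ wS.
  lia.
have Hg' : forall C', cyc_in e S' C' -> 9 <= size C'.
  move=> C' [H1 H2]; apply: Hg; split=> // v /H2; rewrite inS' => /andP [] //.
have [L' [sL' cL' pL']] := IH S' (ex_intro _ y yS') Hmd' Hg'.
exists (C :: L'); split.
- by rewrite /= sL'.
- move=> C'; rewrite inE => /orP [/eqP -> //|/cL' [H1 H2]].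
  by split=> // v /H2; rewrite inS' => /andP [].
- rewrite /= pL' andbT; apply/allP => C' /cL' [_ C'S'].
  apply/allP => u uC; apply/allP => v /C'S'; rewrite inS' inNC negb_or => /andP [/andP [vC vnh] _].
  apply/andP; split.
    by apply/eqP => E; move: vC; rewrite -E uC.
  apply/negP => euv; move/negP: vnh; apply; apply/hasP; exists u => //.
  by rewrite esym.
Qed.

End G4.

Section Ramsey.
Variables (A : eqType) (C : finType).

Lemma size_sum (g : A -> C) (s : seq A) :
  size s = \sum_(c : C) count (fun x => g x == c) s.
Proof.
elim: s => [|x s IH] /=; first by rewrite big1.
rewrite big_split /= -IH.
rewrite (bigD1 (g x)) //= eqxx big1 ?addn0 ?add1n // => c.
by rewrite eq_sym => /negbTE ->.
Qed.

Lemma pigeon (g : A -> C) (s : seq A) m : 0 < #|C| -> #|C| * m <= size s ->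
  exists col, m <= count (fun x => g x == col) s.
Proof.
move=> HC Hs.
have [c0 _] := card_gt0P HC.
case: (boolP [exists col, m <= count (fun x => g x == col) s]).
  by move/existsP.
rewrite negb_exists => /forallP Hall.
have : size s <= #|C| * m.-1.
  rewrite (size_sum g) -sum_nat_const; apply: leq_sum => c _.
  by have := Hall c; rewrite -ltnNge; lia.
move: HC Hs; case: m Hall => [|m] Hall /=.
  by move=> _ _; have := Hall c0.
rewrite mulnS; lia.
Qed.

Fixpoint RN (c n : nat) := if n is n'.+1 then c * RN c n' + 1 else 0.

Lemma chain (f : A -> A -> C) n : 0 < #|C| -> forall s, uniq s -> RN #|C| n <= size s ->
  exists b (g : A -> C), [/\ size b = n, uniq b, {subset b <= s} &
     pairwise (fun x y => f x y == g x) b].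
Proof.
move=> HC; elim: n => [|n IH] s us Hs.
  have [c0 _] := card_gt0P HC.
  by exists [::], (fun _ => c0).
case: s us Hs => [|x s] /=; first by rewrite addn1.
move=> /andP [xs us] Hs.
have Hs' : #|C| * RN #|C| n <= size s by move: Hs; rewrite addn1 ltnS.
have [col Hcol] := @pigeon (f x) s (RN #|C| n) HC Hs'.
rewrite -size_filter in Hcol.
have [b [g [sb ub bs pb]]] := IH _ (filter_uniq _ us) Hcol.
have xb : x \notin b by apply: contra xs => /bs; rewrite mem_filter => /andP [].
exists (x :: b), (fun z => if z == x then col else g z); split.
- by rewrite /= sb.
- by rewrite /= xb ub.
- move=> z; rewrite inE => /orP [/eqP ->|/bs]; first by rewrite inE eqxx.
  by rewrite mem_filter inE => /andP [_ ->]; rewrite orbT.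
- rewrite pairwise_cons eqxx; apply/andP; split.
    by apply/allP => y /bs; rewrite mem_filter => /andP [].
  rewrite (@eq_in_pairwise _ (fun z => z != x) _ (fun x y => f x y == g x)) //.
    by move=> z1 z2 /= /negbTE -> _.
  by apply/allP => z zb; apply: contra xb => /eqP <-.
Qed.

Lemma ramsey (f : A -> A -> C) m s : 0 < #|C| -> uniq s ->
  RN #|C| (#|C| * m) <= size s ->
  exists b col, [/\ m <= size b, uniq b, {subset b <= s} &
     pairwise (fun x y => f x y == col) b].
Proof.
move=> HC us Hs.
have [b [g [sb ub bs pb]]] := chain f HC us Hs.
have Hb : #|C| * m <= size b by rewrite sb.
have [col Hcol] := @pigeon g b m HC Hb.
exists (filter (fun x => g x == col) b), col; split.
- by rewrite size_filter.
- exact: filter_uniq.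
- by move=> z; rewrite mem_filter => /andP [_ /bs].
- apply: (@sub_in_pairwise _ (fun x => g x == col) (fun x y => f x y == g x)).
  + by move=> x y /= /eqP <- _.
  + exact: filter_all.
  + exact: pairwise_filter.
Qed.

End Ramsey.

Section Main.
Variables (T : finType) (e : rel T) (x0 : T).
Hypothesis esym : symmetric e.
Hypothesis eirr : irreflexive e.

Definition disj (A B : seq T) := all (fun x => x \notin B) A.

Lemma shape_bound (L : seq (seq T)) : (forall C, C \in L -> size C <= 8) ->
  sumn (shape L) <= 8 * size L.
Proof.
elim: L => [|C L IH] //= H.
have := H C (mem_head _ _); have := IH (fun D DL => H D (@mem_behead _ (C :: L) D DL)).
lia.
Qed.

Lemma collect R k (S : {set T}) v0 : v0 \in S -> mindeg e S (8 * R + k + 2) ->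
  forall n, n <= R ->
  (exists L : seq (seq T),
    [/\ size L = k, forall C, C \in L -> cyc_in e S C & pairwise (indepb e) L]) \/
  (exists L : seq (seq T),
    [/\ size L = n, forall C, C \in L -> cyc_in e S C /\ size C <= 8 & pairwise disj L]).
Proof.
move=> v0S Hmd; elim=> [|n IH] Hn.
  by right; exists [::]; split.
have [//|[L [sL cL pL]]] := IH (ltnW Hn); first by left.
set X := [set x | x \in flatten L].
have HX : #|X| <= 8 * n.
  have -> : #|X| = #|flatten L| by rewrite -cardsE; apply: eq_card => z; rewrite !inE.
  apply: leq_trans (card_size _) _; rewrite size_flatten -sL.
  by apply: shape_bound => C /cL [].
set U := S :\: X.
have inU : forall z, (z \in U) = (z \notin X) && (z \in S) by move=> z; rewrite inE.
have Hmd' : mindeg e U (k + 2).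
  move=> w; rewrite inU => /andP [_ wS].
  have Hsub : nbS e S w \subset nbS e U w :|: X.
    apply/subsetP => z; rewrite inNb => /andP [zS ewz].
    rewrite in_setU inNb inU zS ewz /= andbT.
    by case: (z \in X).
  have := subset_leq_card Hsub.
  have := (leq_card_setU (nbS e U w) X).1.
  have := Hmd _ wS.
  lia.
have [u uU] : exists u, u \in U.
  apply/card_gt0P.
  have H1 : #|v0 |: nbS e S v0| <= #|S|.
    apply: subset_leq_card; apply/subsetP => z; rewrite in_setU1 inNb.
    by case/orP => [/eqP ->|/andP []].
  move: H1; rewrite cardsU1 inNb eirr andbF /= => H1.
  have H2 := Hmd _ v0S.
  rewrite cardsD.
  have H3 : #|S :&: X| <= #|X| by apply: subset_leq_card; apply: subsetIr.
  lia.
case: (classic (exists C, cyc_in e U C /\ size C <= 8)) => [[C [HC sC]]|Hno].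
  right; exists (C :: L); split.
  - by rewrite /= sL.
  - move=> D; rewrite inE => /orP [/eqP ->|/cL //].
    split=> //; split; first exact: HC.1.
    by move=> z /HC.2; rewrite inU => /andP [].
  - rewrite /= pL andbT; apply/allP => D DL; apply/allP => z /HC.2.
    rewrite inU inE => /andP [zX _]; apply: contra zX => zD.
    by apply/flattenP; exists D.
have Hg : forall C, cyc_in e U C -> 9 <= size C.
  move=> C HC; rewrite ltnNge; apply/negP => H; apply: Hno; exists C; split=> //.
have [L' [sL' cL' pL']] := girth_lemma x0 esym eirr (ex_intro _ u uU) Hmd' Hg.
left; exists L'; split=> // C /cL' [H1 H2]; split=> // z /H2.
by rewrite inU => /andP [].
Qed.

End Main.

Definition Col := option ('I_8 * 'I_8).
Definition Rn (t k : nat) := RN #|{: Col}| (#|{: Col}| * (k + 2 * t)).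

Section R7.
Variables (T : finType) (e : rel T) (x0 : T).
Hypothesis esym : symmetric e.
Hypothesis eirr : irreflexive e.

Lemma mk_indep k (D : nat -> seq T) : (forall i, i < k -> is_cycle e (D i)) ->
  (forall i j, i < j -> j < k -> forall x y, x \in D i -> y \in D j -> (x != y) && ~~ e x y) ->
  has_k_indep_cycles e k.
Proof.
move=> Hc Hi; exists (fun i : 'I_k => D i); split.
  by move=> i; apply: Hc.
move=> i j ij x y xi yj.
case: (ltngtP i j) => [lij|lji|Eij].
- exact: Hi _ _ lij (ltn_ord j) _ _ xi yj.
- have /andP [H1 H2] := Hi _ _ lji (ltn_ord i) _ _ yj xi.
  by rewrite eq_sym H1 esym.
- by move: ij; rewrite (val_inj Eij) eqxx.
Qed.

Lemma seq_indep k (L : seq (seq T)) : size L = k -> (forall C, C \in L -> is_cycle e C) ->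
  pairwise (indepb e) L -> has_k_indep_cycles e k.
Proof.
move=> sL cL pL; apply: (@mk_indep k (fun i => nth [::] L i)).
  by move=> i Hi; apply: cL; apply: mem_nth; rewrite sL.
move=> i j ij jk x y xi yj.
have := (pairwiseP [::] pL) i j; rewrite !inE sL => /(_ (ltn_trans ij jk) jk ij).
by move/allP => /(_ x xi) /allP /(_ y yj).
Qed.

Lemma ramsey_app t k (L : seq (seq T)) : 0 < t -> size L = Rn t k ->
  (forall C, C \in L -> is_cycle e C /\ size C <= 8) -> pairwise (@disj T) L ->
  has_k_indep_cycles e k \/ has_Ktt_subgraph e t.
Proof.
move=> t0 sL cL pL.
pose D (a : nat) := nth [::] L a.
pose f := fun a b : nat => [pick pq : 'I_8 * 'I_8 | (pq.1 < size (D a)) &&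
   (pq.2 < size (D b)) && e (nth x0 (D a) pq.1) (nth x0 (D b) pq.2)].
have HC : 0 < #|{: Col}| by apply/card_gt0P; exists None.
have Hs : RN #|{: Col}| (#|{: Col}| * (k + 2 * t)) <= size (iota 0 (size L)).
  by rewrite size_iota sL.
have [b [col [sb ub bs pb]]] := ramsey f HC (iota_uniq 0 (size L)) Hs.
have bL : forall i, i < size b -> nth 0 b i < size L.
  by move=> i Hi; have := bs _ (mem_nth 0 Hi); rewrite mem_iota.
have Ldisj : forall p q, p < size L -> q < size L -> p != q ->
    forall x y, x \in D p -> y \in D q -> x != y.
  move=> p q Hp Hq pq x y xp yq.
  case: (ltngtP p q) => [lpq|lqp|E]; last by rewrite E eqxx in pq.
  - have := (pairwiseP [::] pL) p q; rewrite !inE => /(_ Hp Hq lpq).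
    move/allP => /(_ x xp) xq; apply/eqP => E; move: xq; rewrite E yq.
    done.
  - have := (pairwiseP [::] pL) q p; rewrite !inE => /(_ Hq Hp lqp).
    move/allP => /(_ y yq) yp; apply/eqP => E; move: yp; rewrite -E xp.
    done.
have Ddisj : forall i j, i < size b -> j < size b -> i != j ->
    forall x y, x \in D (nth 0 b i) -> y \in D (nth 0 b j) -> x != y.
  move=> i j Hi Hj ij; apply: Ldisj; rewrite ?bL //.
  by rewrite nth_uniq.
have Hf : forall i j, i < j -> j < size b -> f (nth 0 b i) (nth 0 b j) = col.
  move=> i j ij Hj; apply/eqP.
  by have := (pairwiseP 0 pb) i j; rewrite !inE; apply => //; apply: ltn_trans Hj.
have Dcyc : forall i, i < size b -> is_cycle e (D (nth 0 b i)).
  by move=> i Hi; have [] := cL _ (mem_nth [::] (bL _ Hi)).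
have Dsz : forall i, i < size b -> size (D (nth 0 b i)) <= 8.
  by move=> i Hi; have [] := cL _ (mem_nth [::] (bL _ Hi)).
clear pb; case: col Hf => [[p q]|] Hf.
-
  right.
  have Hpq : forall i j, i < j -> j < size b ->
     [&& p < size (D (nth 0 b i)), q < size (D (nth 0 b j)) &
         e (nth x0 (D (nth 0 b i)) p) (nth x0 (D (nth 0 b j)) q)].
    move=> i j ij Hj; have := Hf i j ij Hj; rewrite /f.
    case: pickP => [[a c] Hc [Ea Ec]|_ E]; last by [].
    subst a c; by case/andP: Hc => /andP [-> ->] ->.
  pose xs (i : 'I_t) := nth x0 (D (nth 0 b i)) p.
  pose ys (j : 'I_t) := nth x0 (D (nth 0 b (t + j))) q.
  have Htb : forall j : 'I_t, t + j < size b by move=> j; have := ltn_ord j; lia.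
  have Htb0 : t < size b by have := Htb (Ordinal t0); rewrite /=; lia.
  have xsD : forall i : 'I_t, xs i \in D (nth 0 b i).
    move=> i; apply: mem_nth.
    by have /and3P [] := Hpq i t (ltn_ord i) Htb0.
  have ysD : forall j : 'I_t, ys j \in D (nth 0 b (t + j)).
    move=> j; apply: mem_nth.
    have H0j : 0 < t + j by lia.
    by have /and3P [] := Hpq 0 (t + j) H0j (Htb j).
  exists [set xs i | i : 'I_t], [set ys j | j : 'I_t]; split.
  + rewrite card_imset ?card_ord // => i1 i2 E; apply/val_inj/eqP.
    apply: contraT => ne.
    have := Ddisj i1 i2 (ltn_trans (ltn_ord i1) Htb0) (ltn_trans (ltn_ord i2) Htb0)
      ne _ _ (xsD i1) (xsD i2).
    by rewrite E eqxx.
  + rewrite card_imset ?card_ord // => j1 j2 E; apply/val_inj/eqP.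
    apply: contraT => ne.
    have ne' : t + j1 != t + j2 by rewrite eqn_add2l.
    by have := Ddisj _ _ (Htb j1) (Htb j2) ne' _ _ (ysD j1) (ysD j2); rewrite E eqxx.
  + rewrite disjoint_subset; apply/subsetP => z /imsetP [i _ ->].
    rewrite inE; apply/negP => /imsetP [j _ E].
    have ne : (i : nat) != t + j by apply/eqP => E2; have := ltn_ord i; lia.
    have := Ddisj i (t + j) (ltn_trans (ltn_ord i) Htb0) (Htb j) ne _ _ (xsD i) (ysD j).
    by rewrite E eqxx.
  + move=> x y /imsetP [i _ ->] /imsetP [j _ ->].
    have lt : i < t + j by have := ltn_ord i; lia.
    by have /and3P [] := Hpq i (t + j) lt (Htb j).
-
  left.
  have kb : k <= size b by lia.
  apply: (@mk_indep k (fun i => D (nth 0 b i))).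
    by move=> i Hi; apply: Dcyc; lia.
  move=> i j ij jk x y xi yj.
  have Hi : i < size b by lia.
  have Hj : j < size b by lia.
  rewrite (Ddisj i j Hi Hj _ _ _ xi yj) /=; last by rewrite neq_ltn ij.
  have := Hf i j ij Hj; rewrite /f; case: pickP => // Hno _.
  have /(nthP x0) [a Ha Ea] := xi.
  have /(nthP x0) [c Hc Ec] := yj.
  have Ha8 : a < 8 := leq_trans Ha (Dsz i Hi).
  have Hc8 : c < 8 := leq_trans Hc (Dsz j Hj).
  have := Hno (Ordinal Ha8, Ordinal Hc8); rewrite /= Ha Hc Ea Ec /=.
  by move/negbT.
Qed.

End R7.

Section Deg.
Variables (T : finType) (e : rel T) (d : nat).
Hypothesis esym : symmetric e.
Hypothesis eirr : irreflexive e.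
Hypothesis Hdeg : forall S : {set T}, S != set0 -> exists2 v, v \in S & #|nbS e S v| <= d.

Lemma color_lemma n : forall S : {set T}, #|S| <= n ->
  exists f : T -> 'I_d.+1, forall x y, x \in S -> y \in S -> e x y -> f x != f y.
Proof.
elim: n => [|n IH] S HS.
  exists (fun _ => ord0) => x y xS.
  by move: HS; rewrite leqn0 => /eqP /cards0_eq E; rewrite E inE in xS.
case: (eqVneq S set0) => [E|SN].
  by exists (fun _ => ord0) => x y; rewrite E inE.
have [v vS Hv] := Hdeg SN.
have HS' : #|S :\ v| <= n by move: HS; rewrite (cardsD1 v S) vS; lia.
have [f' Hf'] := IH _ HS'.
set F := f' @: nbS e S v.
have [c cF] : exists c, c \notin F.
  case: (pickP (fun c => c \notin F)) => [c cF|H]; first by exists c.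
  have : [set: 'I_d.+1] \subset F.
    by apply/subsetP => c _; have := H c; rewrite /= => /negbFE.
  move/subset_leq_card; rewrite cardsT card_ord => H1.
  have := leq_trans H1 (leq_trans (leq_imset_card f' (nbS e S v)) Hv).
  by rewrite ltnn.
exists (fun x => if x == v then c else f' x) => x y xS yS exy.
have nbF : forall z, z \in S -> e v z -> f' z \in F.
  by move=> z zS evz; apply: imset_f; rewrite inNb zS evz.
case: (eqVneq x v) => [Ex|xv]; case: (eqVneq y v) => [Ey|yv].
- by move: exy; rewrite Ex Ey eirr.
- apply: contra cF => /eqP ->; apply: nbF => //; by rewrite -Ex.
- rewrite eq_sym; apply: contra cF => /eqP ->; apply: nbF => //.
  by rewrite -Ey esym.
- apply: Hf' => //; by rewrite in_setD1 ?xv ?yv.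
Qed.

Lemma sum_lemma n : forall S : {set T}, #|S| <= n ->
  \sum_(u in S) #|nbS e S u| <= 2 * d * #|S|.
Proof.
elim: n => [|n IH] S HS.
  by move: HS; rewrite leqn0 => /eqP /cards0_eq ->; rewrite big_set0.
case: (eqVneq S set0) => [->|SN]; first by rewrite big_set0.
have [v vS Hv] := Hdeg SN.
set S' := S :\ v.
have HS' : #|S'| <= n by move: HS; rewrite /S' (cardsD1 v S) vS; lia.
have ES : #|S| = #|S'| + 1 by rewrite /S' (cardsD1 v S) vS; lia.
rewrite (big_setD1 _ vS) /= -/S'.
have Hu : forall u, u \in S' -> #|nbS e S u| = (u \in nbS e S v) + #|nbS e S' u|.
  move=> u uS'.
  rewrite (cardsD1 v (nbS e S u)).
  have -> : nbS e S u :\ v = nbS e S' u.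
    by apply/setP => w; rewrite in_setD1 !inNb in_setD1 andbA.
  move: uS'; rewrite in_setD1 => /andP [_ uS].
  by rewrite !inNb vS uS esym.
rewrite (eq_bigr _ Hu) big_split /=.
have H1 : \sum_(u in S') (u \in nbS e S v) <= #|nbS e S v|.
  rewrite -sum1_card [X in _ <= X]big_mkcond [X in X <= _]big_mkcond /=.
  by apply: leq_sum => u _; case: (u \in S'); case: (u \in nbS e S v).
have := IH _ HS'.
lia.
Qed.

End Deg.

Section Final.
Variables (T : finType) (e : rel T) (x0 : T).
Hypothesis esym : symmetric e.
Hypothesis eirr : irreflexive e.

Lemma main_struct t k (S : {set T}) v0 : 0 < t -> v0 \in S ->
  mindeg e S (8 * Rn t k + k + 2) -> has_k_indep_cycles e k \/ has_Ktt_subgraph e t.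
Proof.
move=> t0 v0S Hmd.
case: (collect x0 esym eirr v0S Hmd (leqnn (Rn t k))) => [[L [sL cL pL]]|[L [sL cL pL]]].
  left; apply: (seq_indep esym sL) => // C /cL [] //.
apply: (ramsey_app x0 esym t0 sL) => // C /cL [[]].
by move=> H1 _ H2; split.
Qed.

Lemma degen t k : 0 < t -> ~ has_k_indep_cycles e k -> ~ has_Ktt_subgraph e t ->
  forall S : {set T}, S != set0 ->
  exists2 v, v \in S & #|nbS e S v| <= 8 * Rn t k + k + 2.
Proof.
move=> t0 Hk Ht S SN.
have [v0 v0S] : exists v, v \in S by apply/set0Pn.
case: (classic (exists2 v, v \in S & #|nbS e S v| < 8 * Rn t k + k + 2)) => [[v vS Hv]|Hno].
  by exists v => //; apply: ltnW.
have Hmd : mindeg e S (8 * Rn t k + k + 2).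
  move=> v vS; rewrite leqNgt; apply/negP => H; apply: Hno; by exists v.
by case: (main_struct t0 v0S Hmd).
Qed.

End Final.

Local Open Scope ring_scope.

Theorem mainTheorem10 :
  exists h : nat -> nat -> nat,
    forall (t k : nat), (1 <= t)%N -> (1 <= k)%N ->
    forall (T : finType) (e : rel T),
      (0 < #|T|)%N -> simple_graph e ->
      Ok_free e k -> ~ has_Ktt_subgraph e t ->
      avg_degree e <= (h t k)%:R /\ colorable e (h t k).+1.
Proof.
exists (fun t k => 2 * (8 * Rn t k + k + 2))%N.
move=> t k t0 k0 T e T0 [esym eirr] Hk Ht.
have [x0 _] := card_gt0P T0.
set d := (8 * Rn t k + k + 2)%N.
have Hdeg := degen x0 esym eirr t0 Hk Ht.
split.
- have Hs := sum_lemma esym Hdeg (leqnn #|[set: T]|).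
  rewrite /avg_degree.
  have -> : (\sum_(v : T) degree e v)%N = (\sum_(u in [set: T]) #|nbS e [set: T] u|)%N.
    rewrite [RHS](eq_bigl (fun _ => true)); last by move=> u; rewrite in_setT.
    apply: eq_bigr => v _; rewrite /degree; apply: eq_card => w.
    by rewrite inNb !inE.
  rewrite cardsT in Hs.
  rewrite ler_pdivrMr ?ltr0n // -natrM ler_nat.
  exact: Hs.
- have [f Hf] := color_lemma esym eirr Hdeg (leqnn #|[set: T]|).
  have Hle : (d.+1 <= (2 * d).+1)%N by lia.
  exists (fun x => widen_ord Hle (f x)) => x y exy.
  apply: contra (Hf x y (in_setT x) (in_setT y) exy) => /eqP E.
  apply/eqP; apply: val_inj; move: E => /(congr1 val) /=.
  done.
Qed.
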